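(* Let $\Delta$ be an isosceles triangle with side lengths $(2,2,1)$, and let $\rho_\diamond=\rho(\tfrac12,\sqrt3)$. Then $\Delta$ can be domed if and only if $\rho_\diamond$ can be domed.
   Context: Closed polygons with integer side lengths are regarded as closed polygons with unit edges by subdividing each side of length $k$ into $k$ collinear unit segments (so $\Delta$ has $5$ unit edges). A unit rhombus $\rho(a,b)$ is a closed polygon $[v_1v_2v_3v_4]$ in $\mathbb{R}^3$ with four sides of length $1$ and $|v_1v_3|=a$, $|v_2v_4|=b$. A closed polygon with unit edges can be domed if there is a finite connected 2-dimensional simplicial complex which is a compact surface with a single boundary cycle, with a map to $\mathbb{R}^3$ linear on simplices sending each triangle to a unit equilateral triangle and the boundary cycle onto the polygon vertex by vertex in cyclic order. *)

(* Defs.v *)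
From HB Require Import structures.
From mathcomp Require Import all_boot all_order all_algebra.
From mathcomp Require Import reals.
Set Implicit Arguments. Unset Strict Implicit. Unset Printing Implicit Defensive.
Import Order.TTheory GRing.Theory Num.Theory.
Local Open Scope ring_scope.

Section Domes.
Variable R : realType.

Definition sqdist (u v : 'rV[R]_3) : R := \sum_(i < 3) (u 0 i - v 0 i) ^+ 2.

Definition unit_polygon (n : nat) (p : 'I_n -> 'rV[R]_3) : Prop :=
  forall i : 'I_n, sqdist (p i) (p (ordS i)) = 1.

(* Abstract finite pure 2-dimensional simplicial complex on a finite vertex
   type V given by its set of triangles T. *)
Definition is_edge (V : finType) (T : {set {set V}}) (e : {set V}) : bool :=
  (#|e| == 2)%N && [exists t in T, e \subset t].

Definition ntri (V : finType) (T : {set {set V}}) (e : {set V}) : nat :=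
  #|[set t in T | e \subset t]|.

Definition link_rel (V : finType) (T : {set {set V}}) (v : V) : rel V :=
  fun a b => [set v; a; b] \in T.

Definition in_link (V : finType) (T : {set {set V}}) (v a : V) : bool :=
  (a != v) && [exists t in T, (v \in t) && (a \in t)].

Definition skel_rel (V : finType) (T : {set {set V}}) : rel V :=
  fun a b => [exists t in T, (a \in t) && (b \in t)].

(* The complex is a compact connected surface whose boundary is a single
   cycle, enumerated (injectively, in cyclic order) by w. *)
Definition surface_with_boundary_cycle (V : finType) (T : {set {set V}})
    (n : nat) (w : 'I_n -> V) : Prop :=
  [/\
      (forall t, t \in T -> #|t| = 3%N),
      (forall v : V, exists2 t, t \in T & v \in t),
      (forall u v : V, connect (skel_rel T) u v),
      (* surface: every edge lies in one or two triangles, and the link of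
         each vertex is connected (hence an arc or a circle) *)
      (forall e, is_edge T e -> ntri T e = 1%N \/ ntri T e = 2%N) &
      ((forall v a b : V, in_link T v a -> in_link T v b ->
          connect (link_rel T v) a b) /\
      injective w /\
      (forall e, (is_edge T e && (ntri T e == 1%N)) <->
                 exists i : 'I_n, e = [set w i; w (ordS i)]))].

Definition domeable (n : nat) (p : 'I_n -> 'rV[R]_3) : Prop :=
  exists (V : finType) (T : {set {set V}}) (f : V -> 'rV[R]_3) (w : 'I_n -> V),
    [/\ surface_with_boundary_cycle T w,
        (forall t a b, t \in T -> a \in t -> b \in t -> a != b ->
           sqdist (f a) (f b) = 1) &
        (forall i : 'I_n, f (w i) = p i)].

(* The (2,2,1) isosceles triangle A B C, |AB| = |BC| = 2, |CA| = 1,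
   subdivided into 5 unit edges: [A, (A+B)/2, B, (B+C)/2, C]. *)
Definition triangle221 (p : 'I_5 -> 'rV[R]_3) : Prop :=
  exists A B C : 'rV[R]_3,
    [/\ sqdist A B = 4, sqdist B C = 4, sqdist C A = 1 &
        p = (fun i : 'I_5 => match val i with
                             | 0 => A
                             | 1 => 2^-1 *: (A + B)
                             | 2 => B
                             | 3 => 2^-1 *: (B + C)
                             | _ => C
                             end)].

(* A unit rhombus rho(a,b) = [v1 v2 v3 v4]: unit sides, |v1v3| = a, |v2v4| = b
   (here 0-indexed: q_0 q_1 q_2 q_3). *)
Definition unit_rhombus (a b : R) (q : 'I_4 -> 'rV[R]_3) : Prop :=
  [/\ unit_polygon q,
      sqdist (q (inord 0)) (q (inord 2)) = a ^+ 2 &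
      sqdist (q (inord 1)) (q (inord 3)) = b ^+ 2].

End Domes.

(* Main.v *)
Require Import Defs.
From HB Require Import structures.
From mathcomp Require Import all_boot all_order all_algebra.
From mathcomp Require Import reals.
From mathcomp Require Import ring lra.
Set Implicit Arguments. Unset Strict Implicit. Unset Printing Implicit Defensive.
Import Order.TTheory GRing.Theory Num.Theory.

Section Comb.
Variable V : finType.
Implicit Types (T : {set {set V}}) (s r : seq V) (e t : {set V}) (a b c u v w : V).

Lemma card3 (u v w : V) : #|[set u; v; w]| = ((w \notin [set u; v]) + (u != v).+1)%N.
Proof. by rewrite setUC cardsU1 cards2. Qed.
Lemma sub3 (u v w : V) (e : {set V}) : e \subset [set u; v; w] -> #|e| = 2 ->
  [\/ e = [set u; v], e = [set v; w] | e = [set u; w]].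
Proof.
move=> hs h; have /cards2P[a [b [ab ee]]] : #|e| == 2 by rewrite h.
rewrite ee in hs *.
have : b \in [set u;v;w] by apply: (subsetP hs); rewrite !inE eqxx orbT.
have : a \in [set u;v;w] by apply: (subsetP hs); rewrite !inE eqxx.
rewrite !inE => hA hB.
have sw : [set b; a] = [set a; b] by rewrite setUC.
case/orP: hA => [/orP[]|]/eqP ea; case/orP: hB => [/orP[]|]/eqP eb;
  subst a b; rewrite ?eqxx // in ab;
  first [by constructor 1 | by constructor 2 | by constructor 3
        | rewrite -sw; first [by constructor 1 | by constructor 2 | by constructor 3]].
Qed.

Definition cedges s : seq {set V} := [seq [set x.1; x.2] | x <- zip s (rot 1 s)].

Definition surf T s : Prop :=
  [/\ (forall t, t \in T -> #|t| = 3),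
      (forall v, exists2 t, t \in T & v \in t),
      (forall a b, connect (skel_rel T) a b),
      (forall e, is_edge T e -> ntri T e = 1 \/ ntri T e = 2) &
      [/\ (forall v a b, in_link T v a -> in_link T v b -> connect (link_rel T v) a b),
          uniq s, (2 < size s)%N &
          (forall e, (is_edge T e && (ntri T e == 1)) <-> e \in cedges s)]].

Lemma zip_rot (A B : Type) k (s : seq A) (t : seq B) : size s = size t ->
  zip (rot k s) (rot k t) = rot k (zip s t).
Proof.
move=> st; rewrite -[RHS]zip_unzip; congr zip.
  by rewrite /unzip1 map_rot -/(unzip1 _) unzip1_zip ?st.
by rewrite /unzip2 map_rot -/(unzip2 _) unzip2_zip ?st.
Qed.

Lemma cedges_rot k s : cedges (rot k s) =i cedges s.
Proof.
move=> e; rewrite /cedges rot_rot zip_rot ?size_rot // map_rot mem_rot //.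
Qed.

Lemma surf_rot T s k : surf T s -> surf T (rot k s).
Proof.
case=> h1 h2 h3 h4 [h5 h6 h7 h8]; split=> //; split=> //.
- by rewrite rot_uniq.
- by rewrite size_rot.
- by move=> e; rewrite cedges_rot.
Qed.


Lemma ntriU T (t0 : {set V}) e : t0 \notin T -> ntri (t0 |: T) e = (ntri T e + (e \subset t0))%N.
Proof.
move=> nt; rewrite /ntri; case et: (e \subset t0).
  have -> : [set t in t0 |: T | e \subset t] = t0 |: [set t in T | e \subset t].
    by apply/setP=> t; rewrite !inE; case: eqP => // ->; rewrite et.
  by rewrite cardsU1 inE (negbTE nt) addnC.
rewrite addn0; apply: eq_card => t; rewrite !inE; case: eqP => // ->.
by rewrite et (negbTE nt).
Qed.

Lemma is_edgeU T (t0 : {set V}) e : ~~ (e \subset t0) -> is_edge (t0 |: T) e = is_edge T e.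
Proof.
move=> et; rewrite /is_edge; congr (_ && _); apply/existsP/existsP=> [[t]|[t]].
  rewrite !inE => /andP[/orP[/eqP->|tT] h]; first by rewrite h in et.
  by exists t; rewrite tT h.
by move=> /andP[tT h]; exists t; rewrite !inE tT h orbT.
Qed.

Lemma is_edge_sub T e t : t \in T -> e \subset t -> #|e| = 2 -> is_edge T e.
Proof. by move=> tT et ce; rewrite /is_edge ce eqxx; apply/existsP; exists t; rewrite tT. Qed.

Lemma is_edge_ex T e : is_edge T e -> exists2 t, t \in T & e \subset t.
Proof. by case/andP=> _ /existsP[t /andP[]]; exists t. Qed.

Lemma in_link_of T v a t : t \in T -> v \in t -> a \in t -> a != v -> in_link T v a.
Proof. by move=> tT vt ht av; rewrite /in_link av; apply/existsP; exists t; rewrite tT vt ht. Qed.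

Lemma in_link_edge T v a : is_edge T [set v; a] -> in_link T v a.
Proof.
move=> ie; have := ie; case/andP=> c2 _; case/is_edge_ex: ie => t tT st.
apply: (in_link_of tT); try by apply: (subsetP st); rewrite !inE eqxx ?orbT.
by apply: contraTneq c2 => ->; rewrite setUid cards1.
Qed.

Lemma link_sym T v : symmetric (link_rel T v).
Proof. by move=> a b; rewrite /link_rel setUAC. Qed.

Lemma link_hub T v c : (forall a, in_link T v a -> connect (link_rel T v) a c) ->
  forall a b, in_link T v a -> in_link T v b -> connect (link_rel T v) a b.
Proof.
move=> h a b ha hb; apply: connect_trans (h a ha) _.
by rewrite (sym_connect_sym (@link_sym T v)); apply: h.
Qed.

Lemma link_mono T T' v a b : T \subset T' -> connect (link_rel T v) a b -> connect (link_rel T' v) a b.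
Proof.
move=> sT; apply: connect_sub => x y xy; apply: connect1.
by rewrite /link_rel (subsetP sT).
Qed.

Lemma skel_mono T T' a b : T \subset T' -> connect (skel_rel T) a b -> connect (skel_rel T') a b.
Proof.
move=> sT; apply: connect_sub => x y /existsP[t /andP[tT xy]]; apply: connect1.
by apply/existsP; exists t; rewrite (subsetP sT).
Qed.

Lemma surf_card2 T s e : surf T s -> e \in cedges s -> #|e| = 2.
Proof. by case=> _ _ _ _ [_ _ _ h] /h /andP[/andP[/eqP]]. Qed.


Lemma mem_zip (A B : eqType) (s1 : seq A) (t1 : seq B) (a : A) (b : B) : (a, b) \in zip s1 t1 -> a \in s1 /\ b \in t1.
Proof.
elim: s1 t1 => [|x s1 IH] [|y t1] //=; rewrite inE => /orP[/eqP[-> ->]|/IH[h1 h2]].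
  by rewrite !inE !eqxx.
by rewrite !inE h1 h2 !orbT.
Qed.

Definition ctl u w r : seq {set V} := [seq [set x.1; x.2] | x <- zip (w :: r) (rcons r u)].

Lemma cedges3 u v w r : cedges [:: u, v, w & r] = [set u; v] :: [set v; w] :: ctl u w r.
Proof. by rewrite /cedges rot1_cons. Qed.

Lemma cedges2 u w r : cedges [:: u, w & r] = [set u; w] :: ctl u w r.
Proof. by rewrite /cedges rot1_cons. Qed.

Lemma ctl_mem u w r e x : e \in ctl u w r -> x \in e -> x \in [:: u, w & r].
Proof.
case/mapP=> [[a b]] /mem_zip [ha hb] -> /=; rewrite !inE => /orP[]/eqP->.
  by move: ha; rewrite inE => ->; rewrite orbT.
by move: hb; rewrite mem_rcons inE => /orP[->|->]; rewrite ?orbT.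
Qed.

Lemma surf_ear T u v w r : surf T [:: u, v, w & r] -> r != [::] ->
  (forall t, t \in T -> ~~ ((u \in t) && (w \in t))) ->
  surf ([set u; v; w] |: T) [:: u, w & r].
Proof.
move=> S rn nuw; case: (S) => h1 h2 h3 h4 [h5 h6 h7 h8].
set t0 := [set u; v; w].
have := h6; rewrite cons_uniq => /andP[hu]; rewrite cons_uniq => /andP[hv hwr].
move: (hu); rewrite inE negb_or => /andP[uv hu'].
move: (hu'); rewrite inE negb_or => /andP[uw _].
move: (hv); rewrite inE negb_or => /andP[vw _].
have wu : w != u by rewrite eq_sym.
have wv : w != v by rewrite eq_sym.
have nt : t0 \notin T.
  by apply/negP=> /nuw; rewrite /t0 !inE !eqxx ?orbT.
have buv : is_edge T [set u; v] && (ntri T [set u; v] == 1) by apply/h8; rewrite cedges3 inE eqxx.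
have bvw : is_edge T [set v; w] && (ntri T [set v; w] == 1) by apply/h8; rewrite cedges3 !inE eqxx orbT.
have nuw0 : ntri T [set u; w] = 0.
  rewrite /ntri; apply/eqP; rewrite cards_eq0; apply/eqP/setP => t; rewrite !inE.
  apply/negbTE; apply/andP => [[tT st]]; move: (nuw t tT).
  by rewrite (subsetP st u) ?(subsetP st w) // !inE eqxx ?orbT.
have sT : T \subset t0 |: T by apply: subsetUr.
have tT' : t0 \in t0 |: T by rewrite !inE eqxx.
have LT : forall x a, in_link (t0 |: T) x a -> in_link T x a \/ [/\ x \in t0, a \in t0 & a != x].
  move=> x a /andP[ax /existsP[t /andP[/setU1P[->|tT] /andP[xt ht]]]].
    by right; split.
  by left; apply: (in_link_of tT).
have luv : in_link T u v by apply: in_link_edge; case/andP: buv.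
have lvu : in_link T v u by apply: in_link_edge; rewrite setUC; case/andP: buv.
have lvw : in_link T v w by apply: in_link_edge; case/andP: bvw.
have lwv : in_link T w v by apply: in_link_edge; rewrite setUC; case/andP: bvw.
split.
- move=> t; rewrite !inE => /orP[/eqP->|/h1 //].
  by rewrite card3 !inE negb_or wu wv uv.
- move=> x; case: (h2 x) => t tT xt; exists t => //; exact: (subsetP sT).
- by move=> a b; apply: skel_mono sT (h3 a b).
- move=> e ie; case et: (e \subset t0).
    have c2 : #|e| = 2 by case/andP: ie => /eqP.
    rewrite ntriU // et; case: (sub3 et c2) => ->.
    + by right; move: buv => /andP[_ /eqP->].
    + by right; move: bvw => /andP[_ /eqP->].
    + by left; rewrite nuw0.
  rewrite ntriU // et addn0; apply: h4.
  by move: ie; rewrite is_edgeU ?et.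
split.
- move=> x; case: (eqVneq x u) => [->|xu].
    apply: (link_hub (c := v)) => a /LT [la|[_ ha au]].
      by apply: link_mono sT _; apply: h5.
    move: ha; rewrite !inE (negbTE au) /= => /orP[/eqP->|/eqP->]; first exact: connect0.
    apply: connect1; rewrite /link_rel.
    have -> : [set u; w; v] = t0.
      by apply/setP=> z; rewrite !inE; case: (z == u); case: (z == v); case: (z == w).
    exact: tT'.
  case: (eqVneq x w) => [->|xw].
    apply: (link_hub (c := v)) => a /LT [la|[_ ha au]].
      by apply: link_mono sT _; apply: h5.
    move: ha; rewrite !inE (negbTE au) /= orbF => /orP[/eqP->|/eqP->]; last exact: connect0.
    apply: connect1; rewrite /link_rel.
    have -> : [set w; u; v] = t0.
      by apply/setP=> z; rewrite !inE; case: (z == u); case: (z == v); case: (z == w).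
    exact: tT'.
  have LT' : forall a, in_link (t0 |: T) x a -> in_link T x a.
    move=> a /LT [//|[hx ha ax]].
    move: hx; rewrite !inE (negbTE xu) (negbTE xw) /= orbF => /eqP ex; subst x.
    by move: ha; rewrite !inE (negbTE ax) /= orbF => /orP[]/eqP->.
  by move=> a b /LT' ha /LT' hb; apply: link_mono sT _; apply: h5.
- by rewrite cons_uniq hu' hwr.
- by move: rn; rewrite -size_eq0 /= !ltnS lt0n.
move=> e; rewrite cedges2 inE; split.
  case/andP=> ie /eqP n1.
  have c2 : #|e| = 2 by case/andP: ie => /eqP.
  case et: (e \subset t0).
    move: n1; rewrite ntriU // et; case: (sub3 et c2) => ee; rewrite ee.
    + by move: buv => /andP[_ /eqP->].
    + by move: bvw => /andP[_ /eqP->].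
    + by rewrite eqxx.
  have : e \in cedges [:: u, v, w & r].
    apply/h8; rewrite -(is_edgeU T (t0 := t0)); last by rewrite et.
    by rewrite ie /= -n1 ntriU // et addn0.
  rewrite cedges3 !inE => /orP[/eqP ee|/orP[/eqP ee|->]]; last by rewrite orbT.
    by move: et; rewrite ee /t0; move/negP; case; apply/subsetP=> z; rewrite !inE => /orP[]->; rewrite ?orbT.
  by move: et; rewrite ee /t0; move/negP; case; apply/subsetP=> z; rewrite !inE => /orP[]->; rewrite ?orbT.
case/orP=> [/eqP->|he].
  rewrite ntriU // nuw0 /=.
  have suw : [set u; w] \subset t0 by apply/subsetP=> z; rewrite !inE => /orP[]->; rewrite ?orbT.
  by rewrite suw andbT; apply: (is_edge_sub tT' suw); rewrite cards2 uw.
have hE : e \in cedges [:: u, v, w & r] by rewrite cedges3 !inE he !orbT.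
have nv : v \notin e.
  by apply/negP => /(ctl_mem he); rewrite inE eq_sym (negbTE uv) /= => hh; rewrite hh in hv.
have et : ~~ (e \subset t0).
  apply/negP=> et; have c2 := surf_card2 S hE.
  case: (sub3 et c2) => ee; rewrite ee in nv he hE.
  + by rewrite !inE eqxx orbT in nv.
  + by rewrite !inE eqxx in nv.
  + by move: hE => /h8 /andP[/is_edge_ex [t tT st] _]; move: (nuw t tT); rewrite (subsetP st u) ?(subsetP st w) // !inE eqxx ?orbT.
by rewrite is_edgeU // ntriU // (negbTE et) addn0; apply/h8.
Qed.

End Comb.

Section Lift.
Variable V : finType.
Implicit Types (T : {set {set V}}) (s r : seq V) (e t : {set V}) (a b c u v w x : V).
Local Notation S := (@Some V).
Local Notation liftS A := [set S z | z in A].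

Definition liftT T : {set {set option V}} := [set liftS t | t : {set V} in T].

Lemma S_inj : injective S. Proof. by move=> x y []. Qed.

Lemma imsetS_inj e t : (liftS e \subset liftS t) = (e \subset t).
Proof.
apply/idP/idP => [/subsetP h|/(imsetS S) //].
by apply/subsetP=> z ze; have := h (S z); rewrite !(mem_imset _ _ S_inj); apply.
Qed.

Lemma liftS_inj : injective (fun A : {set V} => liftS A).
Proof. exact: imset_inj S_inj. Qed.

Lemma noneS e : None \notin liftS e.
Proof. by apply/imsetP => [[z _]]. Qed.

Lemma noneL T (t' : {set option V}) : t' \in liftT T -> None \notin t'.
Proof. by case/imsetP=> t _ ->; apply: noneS. Qed.

Lemma S_pre (e' : {set option V}) : None \notin e' -> e' = liftS (S @^-1: e').
Proof.
move=> hn; apply/setP => [[z|]]; first by rewrite (mem_imset _ _ S_inj) inE.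
by rewrite (negbTE hn) (negbTE (noneS _)).
Qed.

Lemma mem_liftT T t : (liftS t \in liftT T) = (t \in T).
Proof. exact: (mem_imset _ _ liftS_inj). Qed.

Lemma ntri_lift T e : ntri (liftT T) (liftS e) = ntri T e.
Proof.
rewrite /ntri.
have -> : [set t' in liftT T | liftS e \subset t'] = [set liftS t | t : {set V} in [set t in T | e \subset t]].
  apply/setP => t'; apply/idP/idP.
    rewrite inE; case/andP => /imsetP[t tT ->] h; apply/imsetP; exists t => //.
    by rewrite inE tT -imsetS_inj h.
  case/imsetP=> t; rewrite !inE; case/andP => tT et ->.
  by rewrite imsetS_inj et andbT mem_liftT.
by rewrite (card_imset _ liftS_inj).
Qed.

Lemma is_edge_lift T e : is_edge (liftT T) (liftS e) = is_edge T e.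
Proof.
rewrite /is_edge (card_imset _ S_inj); congr (_ && _).
apply/existsP/existsP => [[t' /andP[/imsetP[t tT ->]]]|[t /andP[tT et]]].
  by rewrite imsetS_inj => h; exists t; rewrite tT h.
by exists (liftS t); rewrite mem_liftT tT imsetS_inj et.
Qed.

Lemma connect_map (A B : finType) (f : A -> B) (e : rel A) (e' : rel B) :
  (forall a1 b1 : A, e a1 b1 -> e' (f a1) (f b1)) -> forall a1 b1 : A, connect e a1 b1 -> connect e' (f a1) (f b1).
Proof.
move=> h a1 b1 /connectP[p pth ->]; elim: p a1 pth => [|y p IH] a1 /=; first by move=> _; exact: connect0.
by case/andP=> eay /IH hc; apply: connect_trans (connect1 (h _ _ eay)) hc.
Qed.

Lemma lift3 a b c : liftS [set a; b; c] = [set S a; S b; S c].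
Proof. by rewrite !imsetU !imset_set1. Qed.
Lemma lift2 a b : liftS [set a; b] = [set S a; S b].
Proof. by rewrite !imsetU !imset_set1. Qed.

Lemma zip_map2 (A B C D : Type) (f : A -> C) (g : B -> D) (s1 : seq A) (t1 : seq B) :
  zip (map f s1) (map g t1) = map (fun p => (f p.1, g p.2)) (zip s1 t1).
Proof. by elim: s1 t1 => [|x s1 IH] [|y t1] //=; rewrite IH. Qed.

Lemma ctl_map u v r : ctl (S u) (S v) (map S r) = map (fun A : {set V} => liftS A) (ctl u v r).
Proof.
rewrite /ctl -map_rcons -(map_cons S v) zip_map2 -!map_comp; apply: eq_map => -[x y] /=.
by rewrite lift2.
Qed.

Lemma ctl_notuv u v r : uniq [:: u, v & r] -> r != [::] -> [set u; v] \notin ctl u v r.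
Proof.
rewrite cons_uniq inE negb_or => /andP[/andP[uv ur] /andP[vr _]] rn.
apply/negP => /mapP [[a b] hab] /= ee.
have ua : u \in [set a; b] by rewrite -ee !inE eqxx.
have va : v \in [set a; b] by rewrite -ee !inE eqxx orbT.
have [ha hb] := mem_zip hab.
have eb : u = b.
  move: ua; rewrite !inE => /orP[/eqP eua|/eqP //]; subst a.
  by move: ha; rewrite inE (negbTE uv) /= (negbTE ur).
subst b; have ea : v = a.
  by move: va; rewrite !inE => /orP[/eqP //|/eqP vu]; rewrite vu eqxx in uv.
subst a; clear ha hb; move: hab ur vr; case: r rn => [//|y r] _ /=; rewrite inE => /orP[/eqP [->]|/mem_zip [h _]].
  by rewrite inE eqxx.
by move=> _; rewrite h.
Qed.

Lemma surf_add T u v r : surf T [:: u, v & r] ->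
  surf ([set S u; None; S v] |: liftT T) [:: S u, None, S v & map S r].
Proof.
move=> SS; case: (SS) => h1 h2 h3 h4 [h5 h6 h7 h8].
set t0 := [set S u; None; S v]; set L := liftT T.
have rn : r != [::] by move: h7; rewrite -size_eq0 /= !ltnS lt0n.
move: (h6); rewrite cons_uniq inE negb_or => /andP[/andP[uv ur] /andP[vr hr]].
have Suv : S u != S v by apply: contra uv => /eqP [->].
have nt : t0 \notin L by apply/negP => /noneL; rewrite !inE eqxx orbT.
have sL : L \subset t0 |: L by apply: subsetUr.
have tT' : t0 \in t0 |: L by rewrite !inE eqxx.
have buv : is_edge T [set u; v] && (ntri T [set u; v] == 1) by apply/h8; rewrite cedges2 inE eqxx.
have ntriN : forall E : {set option V}, None \in E -> ntri L E = 0.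
  move=> E ne; rewrite /ntri; apply/eqP; rewrite cards_eq0; apply/eqP/setP => tt; rewrite !inE.
  apply/negbTE; apply/andP => [[/noneL tn /subsetP st]].
  by move: tn; rewrite (st _ ne).
have inT' : forall tt : {set option V}, tt \in t0 |: L -> tt = t0 \/ tt \in L by move=> tt /setU1P.
have LT : forall x (oa : option V), in_link (t0 |: L) (S x) oa ->
    (exists2 a, oa = S a & in_link T x a) \/ [/\ S x \in t0, oa \in t0 & oa != S x].
  move=> x oa /andP[ax /existsP[tt /andP[/setU1P[->|tL] /andP[xt ht]]]].
    by right; split.
  left; case/imsetP: tL xt ht ax => t tT -> xt.
  case/imsetP=> a ha -> ax; exists a => //.
  have xt' : x \in t by rewrite -(mem_imset _ _ S_inj).
  have ax' : a != x by apply: contraNneq ax => ->.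
  exact: (in_link_of tT xt' ha ax').
have Lk : forall x a b, connect (link_rel T x) a b -> connect (link_rel (t0 |: L) (S x)) (S a) (S b).
  move=> x; apply: connect_map => a b h; rewrite /link_rel -lift3.
  by apply: (subsetP sL); rewrite mem_liftT.
split.
- move=> tt /setU1P [->|/imsetP [t tT ->]].
    by rewrite card3 !inE negb_or [S v == _]eq_sym (negbTE Suv).
  by rewrite (card_imset _ S_inj) h1.
- move=> [x|]; last by exists t0; rewrite // !inE eqxx orbT.
  case: (h2 x) => t tT xt; exists (liftS t); first by apply: (subsetP sL); rewrite mem_liftT.
  by rewrite (mem_imset _ _ S_inj).
- have sk : forall a b, connect (skel_rel T) a b -> connect (skel_rel (t0 |: L)) (S a) (S b).
    apply: connect_map => a b /existsP [t /andP [tT ab]]; apply/existsP; exists (liftS t).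
    by rewrite (subsetP sL) ?mem_liftT // !(mem_imset _ _ S_inj).
  have toU : forall oa, connect (skel_rel (t0 |: L)) oa (S u).
    move=> [x|]; first exact: sk.
    by apply: connect1; apply/existsP; exists t0; rewrite tT' !inE !eqxx ?orbT.
  have sym : symmetric (skel_rel (t0 |: L)).
    by move=> y z; apply/existsP/existsP => -[tt /andP[h /andP[p q]]]; exists tt; rewrite h p q.
  move=> y z; apply: connect_trans (toU y) _.
  by rewrite (sym_connect_sym sym); apply: toU.
- move=> E ie; have c2 : #|E| = 2 by case/andP: ie => /eqP.
  case: (boolP (None \in E)) => ne.
    left; rewrite ntriU // ntriN //.
    case/is_edge_ex: ie => tt /setU1P [et|/noneL hn] st; first by rewrite -et st.
    by move: hn; rewrite (subsetP st _ ne).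
  set e := S @^-1: E; have EE : E = liftS e := S_pre ne.
  rewrite EE in ie c2 *; rewrite ntriU // ntri_lift.
  case et: (liftS e \subset t0).
    case: (sub3 et c2) => ee.
    + by move: (noneS e); rewrite ee !inE eqxx orbT.
    + by move: (noneS e); rewrite ee !inE eqxx.
    + have -> : e = [set u; v] by apply: liftS_inj; rewrite /= ee lift2.
      by right; move: buv => /andP[_ /eqP->].
  rewrite addn0; apply: h4; move: ie; rewrite is_edgeU ?et // is_edge_lift //.
have luv : in_link T u v by apply: in_link_edge; case/andP: buv.
have lvu : in_link T v u by apply: in_link_edge; rewrite setUC; case/andP: buv.
split.
- move=> [x|]; last first.
    apply: (link_hub (c := S u)) => oa /andP[an /existsP[tt /andP[/setU1P[->|/noneL hn] /andP[nt' ht]]]];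
      last by rewrite nt' in hn.
    move: ht; rewrite !inE => /orP[/orP[/eqP->|/eqP ea]|/eqP->]; first exact: connect0.
      by rewrite ea eqxx in an.
    apply: connect1; rewrite /link_rel.
    have -> : [set None; S v; S u] = t0.
      by apply/setP=> z; rewrite !inE; case: (z == S u); case: (z == None); case: (z == S v).
    exact: tT'.
  case: (eqVneq x u) => [->|xu].
    apply: (link_hub (c := S v)) => oa /LT [[a -> la]|[_ ha au]].
      by apply: Lk; apply: h5.
    move: ha; rewrite !inE (negbTE au) /= => /orP[/eqP->|/eqP->]; last exact: connect0.
    by apply: connect1; rewrite /link_rel.
  case: (eqVneq x v) => [->|xv].
    apply: (link_hub (c := S u)) => oa /LT [[a -> la]|[_ ha au]].
      by apply: Lk; apply: h5.
    move: ha; rewrite !inE (negbTE au) /= orbF => /orP[/eqP->|/eqP->]; first exact: connect0.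
    apply: connect1; rewrite /link_rel.
    have -> : [set S v; None; S u] = t0.
      by apply/setP=> z; rewrite !inE; case: (z == S u); case: (z == None); case: (z == S v).
    exact: tT'.
  have LT' : forall oa, in_link (t0 |: L) (S x) oa -> exists2 a, oa = S a & in_link T x a.
    move=> oa /LT [//|[hx _ _]].
    by move: hx; rewrite !inE /= => /orP[/orP[/eqP[ex]|//]|/eqP[ex]]; [rewrite ex eqxx in xu|rewrite ex eqxx in xv].
  by move=> oa ob /LT' [a -> ha] /LT' [b -> hb]; apply: Lk; apply: h5.
- have hm : uniq (map S [:: u, v & r]) by rewrite (map_inj_uniq S_inj).
  have nN : None \notin map S r by apply/mapP => [[y _]].
  move: hm; rewrite /= !inE /= => /andP[-> /andP[-> ->]].
  by rewrite nN.
- by rewrite /= size_map.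
move=> E; rewrite cedges3 ctl_map !inE.
case: (boolP (None \in E)) => ne.
  have nm : E \notin map (fun A : {set V} => liftS A) (ctl u v r).
    by apply/mapP => [[e _ ee]]; move: ne; rewrite ee (negbTE (noneS _)).
  rewrite (negbTE nm) orbF ntriU // ntriN //; split.
    case/andP => ie _; have c2 : #|E| = 2 by case/andP: ie => /eqP.
    case/is_edge_ex: ie => tt /setU1P [et|/noneL hn] st; last by rewrite (subsetP st _ ne) in hn.
    rewrite et in st; case: (sub3 st c2) => ee; rewrite ee in ne *; rewrite ?eqxx ?orbT //.
    by rewrite !inE in ne.
  have s1 : [set S u; None] \subset t0 by apply/subsetP=> z; rewrite !inE => /orP[]->; rewrite ?orbT.
  have s2 : [set None; S v] \subset t0 by apply/subsetP=> z; rewrite !inE => /orP[]->; rewrite ?orbT.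
  case/orP => /eqP->.
    by rewrite s1 (is_edge_sub tT' s1) // cards2.
  by rewrite s2 (is_edge_sub tT' s2) // cards2.
set e := S @^-1: E; have EE : E = liftS e := S_pre ne.
rewrite EE.
have f1 : (liftS e == [set S u; None]) = false.
  by apply/negbTE; apply: contraNneq (noneS e) => ->; rewrite !inE eqxx orbT.
have f2 : (liftS e == [set None; S v]) = false.
  by apply/negbTE; apply: contraNneq (noneS e) => ->; rewrite !inE eqxx.
rewrite f1 f2 /= (mem_map liftS_inj) ntriU // ntri_lift.
have key : liftS e \subset t0 -> #|liftS e| = 2 -> e = [set u; v].
  move=> et c2; case: (sub3 et c2) => ee.
  + by move: (noneS e); rewrite ee !inE eqxx orbT.
  + by move: (noneS e); rewrite ee !inE eqxx.
  + by apply: liftS_inj; rewrite /= ee lift2.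
case et: (liftS e \subset t0).
  split.
    case/andP=> ie; have c2 : #|liftS e| = 2 by case/andP: ie => /eqP.
    by rewrite (key et c2); move: buv => /andP[_ /eqP->].
  move=> he.
  have : e \in cedges [:: u, v & r] by rewrite cedges2 inE he orbT.
  move/h8 => /andP[/andP[/eqP c2 _] _].
  have ee := key et (etrans (card_imset _ S_inj) c2).
  by move: he; rewrite ee (negbTE (ctl_notuv h6 rn)).
rewrite addn0 is_edgeU ?et // is_edge_lift.
apply: iff_trans (h8 e) _; rewrite cedges2 inE.
have -> : (e == [set u; v]) = false.
  apply/negbTE; apply: contraFneq et => ->.
  by rewrite lift2; apply/subsetP=> z; rewrite !inE => /orP[]->; rewrite ?orbT.
by [].
Qed.

End Lift.

Section Conv.
Variable V : finType.
Implicit Types (T : {set {set V}}) (s r : seq V) (e t : {set V}) (a b c u v w x : V).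

Lemma cedges_nth (x0 : V) n s e : size s = n ->
  (e \in cedges s <-> exists i : 'I_n, e = [set nth x0 s i; nth x0 s (ordS i)]).
Proof.
move=> <-.
have nthr : forall i, i < size s -> nth x0 (rot 1 s) i = nth x0 s (i.+1 %% size s).
  case: (s) => [//|y s'] i /=; rewrite ltnS => hi; rewrite rot1_cons nth_rcons.
  case: (ltngtP i (size s')) => hi'.
  - by rewrite modn_small.
  - by rewrite leqNgt hi' in hi.
  - by rewrite hi' modnn.
have sz : size (zip s (rot 1 s)) = size s by rewrite size_zip size_rot minnn.
split.
  case/mapP=> [[a b]] /(nthP (x0, x0)) [i hi eab] ->.
  rewrite sz in hi; exists (Ordinal hi).
  by move: eab; rewrite nth_zip ?size_rot // => -[<- <-] /=; rewrite nthr.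
case=> i ->; apply/mapP; exists (nth (x0, x0) (zip s (rot 1 s)) i).
  by apply: mem_nth; rewrite sz.
by rewrite nth_zip ?size_rot //= nthr.
Qed.

Lemma surf_of_sbc n T (w : 'I_n -> V) : 2 < n -> surface_with_boundary_cycle T w ->
  surf T (map w (enum 'I_n)).
Proof.
move=> n2 [h1 h2 h3 h4 [h5 [h6 h8]]]; split=> //; split=> //.
- by rewrite (map_inj_uniq h6) enum_uniq.
- by rewrite size_map size_enum_ord.
have nw : forall (x0 : V) (i : 'I_n), nth x0 (map w (enum 'I_n)) i = w i.
  move=> x0 i; rewrite (nth_map i) ?size_enum_ord //; congr w.
  by apply: val_inj; rewrite /= nth_enum_ord.
case: n n2 w h6 h8 nw => [//|n] _ w h6 h8 nw.
have sz : size (map w (enum 'I_n.+1)) = n.+1 by rewrite size_map size_enum_ord.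
move=> e; apply: iff_sym; apply: iff_trans (cedges_nth (w ord0) e sz) _.
apply: iff_sym; apply: iff_trans (h8 e) _.
by split=> -[i ->]; exists i; rewrite !nw.
Qed.

Lemma sbc_of_surf T s (x0 : V) n : size s = n -> surf T s ->
  surface_with_boundary_cycle T (fun i : 'I_n => nth x0 s i).
Proof.
move=> sn [h1 h2 h3 h4 [h5 h6 h7 h8]]; split=> //; split=> //; split.
- move=> i j /eqP; rewrite nth_uniq ?sn // => /eqP; exact: val_inj.
move=> e; apply: iff_trans (h8 e) _; exact: cedges_nth.
Qed.

End Conv.

Local Open Scope ring_scope.
Section Geo.
Variable R : realFieldType.
Implicit Types (x y z a b c : 'rV[R]_3).

Definition sqd (u v : 'rV[R]_3) : R := \sum_(i < 3) (u 0 i - v 0 i) ^+ 2.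
Definition dot (u v : 'rV[R]_3) : R := \sum_(i < 3) u 0 i * v 0 i.

Definition i1 : 'I_3 := lift ord0 ord0.
Definition i2 : 'I_3 := lift ord0 (lift ord0 ord0).

Definition cross x y : 'rV[R]_3 :=
  \row_(k < 3) nth 0 [:: x 0 i1 * y 0 i2 - x 0 i2 * y 0 i1;
                         x 0 i2 * y 0 ord0 - x 0 ord0 * y 0 i2;
                         x 0 ord0 * y 0 i1 - x 0 i1 * y 0 ord0] k.

Lemma sum3 (F : 'I_3 -> R) : \sum_(i < 3) F i = F ord0 + F i1 + F i2.
Proof. by rewrite !big_ord_recl big_ord0 addr0 addrA. Qed.

Lemma sqdC x y : sqd x y = sqd y x.
Proof. rewrite /sqd !sum3; ring. Qed.

Lemma sqd0 x : sqd x x = 0.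
Proof. by rewrite /sqd big1 // => i _; rewrite subrr expr0n. Qed.

Lemma sqd_lin P x y z (a1 b1 c1 a2 b2 c2 : R) :
  sqd (P + a1 *: x + b1 *: y + c1 *: z) (P + a2 *: x + b2 *: y + c2 *: z) =
  (a1 - a2) ^+ 2 * dot x x + (b1 - b2) ^+ 2 * dot y y + (c1 - c2) ^+ 2 * dot z z
  + 2 * (a1 - a2) * (b1 - b2) * dot x y + 2 * (a1 - a2) * (c1 - c2) * dot x z
  + 2 * (b1 - b2) * (c1 - c2) * dot y z.
Proof. rewrite /sqd /dot !sum3 !mxE; ring. Qed.

Lemma dot_cross1 x y : dot x (cross x y) = 0.
Proof. rewrite /dot !sum3 !mxE /=; ring. Qed.
Lemma dot_cross2 x y : dot y (cross x y) = 0.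
Proof. rewrite /dot !sum3 !mxE /=; ring. Qed.
Lemma dot_cross3 x y : dot (cross x y) (cross x y) = dot x x * dot y y - dot x y ^+ 2.
Proof. rewrite /dot !sum3 !mxE /=; ring. Qed.
Lemma sqd_dot x y : sqd x y = dot (x - y) (x - y).
Proof. rewrite /sqd /dot !sum3 !mxE; ring. Qed.


Definition Pm (p : 'I_4 -> 'rV[R]_3) : 'M[R]_3 := \matrix_(i < 3) (p (lift ord0 i) - p ord0).

Lemma sqd_mx a b : sqd a b = ((a - b) *m (a - b)^T) 0 0.
Proof. by rewrite /sqd mxE; apply: eq_bigr => k _; rewrite !mxE expr2. Qed.

Lemma gramE p i j : (Pm p *m (Pm p)^T) i j =
  (sqd (p (lift ord0 i)) (p ord0) + sqd (p (lift ord0 j)) (p ord0)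
   - sqd (p (lift ord0 i)) (p (lift ord0 j))) / 2.
Proof.
rewrite mxE; under eq_bigr => k _ do rewrite !mxE.
rewrite /sqd !sum3; field.
by [].
Qed.

Lemma iso4 (p q : 'I_4 -> 'rV[R]_3) (Gi : 'M[R]_3) :
  (forall i j, sqd (p i) (p j) = sqd (q i) (q j)) ->
  Pm p *m (Pm p)^T *m Gi = 1%:M ->
  exists L : 'M[R]_3,
    (forall x y, sqd (q ord0 + (x - p ord0) *m L) (q ord0 + (y - p ord0) *m L) = sqd x y) /\
    (forall i, q ord0 + (p i - p ord0) *m L = q i).
Proof.
move=> hd hG; set P := Pm p; set Q := Pm q.
have GG : Q *m Q^T = P *m P^T by apply/matrixP => i j; rewrite !gramE !hd.
set K := P^T *m Gi.
have PK : P *m K = 1%:M by rewrite mulmxA.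
have KP : K *m P = 1%:M := mulmx1C PK.
have LLT : (K *m Q) *m (K *m Q)^T = 1%:M.
  by rewrite trmx_mul !mulmxA -(mulmxA K Q) GG !mulmxA KP mul1mx -trmx_mul KP trmx1.
have PL : P *m (K *m Q) = Q by rewrite mulmxA PK mul1mx.
exists (K *m Q); move: (K *m Q) LLT PL => L LLT PL; split.
  move=> x y; rewrite !sqd_mx.
  have -> : q ord0 + (x - p ord0) *m L - (q ord0 + (y - p ord0) *m L) =
            (x - y) *m L.
    by apply/rowP => k; rewrite !mxE !sum3 !mxE; ring.
  by rewrite trmx_mul mulmxA -(mulmxA (x - y) L) LLT mulmx1.
move=> i; case: (unliftP ord0 i) => [j ->|->]; last by rewrite subrr mul0mx addr0.
have -> : p (lift ord0 j) - p ord0 = row j P by rewrite rowK.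
by rewrite -row_mul PL rowK addrC subrK.
Qed.

End Geo.

Local Open Scope ring_scope.

Lemma tri_pairs (V : finType) (P : V -> V -> Prop) u v w :
  (forall x y, P x y -> P y x) -> P u v -> P v w -> P u w ->
  forall a b, a \in [set u; v; w] -> b \in [set u; v; w] -> a != b -> P a b.
Proof.
move=> sym h1 h2 h3 a b; rewrite !inE.
by move=> /orP[/orP[]|]/eqP-> /orP[/orP[]|]/eqP->; rewrite ?eqxx //; auto.
Qed.


Lemma surf_of_sbc2 (V : finType) n (T : {set {set V}}) (w : 'I_n -> V) s (x0 : V) :
  (2 < n)%N -> size s = n -> (forall i : 'I_n, nth x0 s i = w i) ->
  surface_with_boundary_cycle T w -> surf T s.
Proof.
move=> n2 sn hs hw; have -> : s = map w (enum 'I_n); last exact: surf_of_sbc.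
apply: (eq_from_nth (x0 := x0)); first by rewrite size_map size_enum_ord.
move=> i; rewrite sn => hi; have := hs (Ordinal hi); rewrite /= => ->.
rewrite (nth_map (Ordinal hi)) ?size_enum_ord //; congr w.
by apply: val_inj; rewrite /= nth_enum_ord.
Qed.

Section Final.
Variable R : realType.

Definition unitT (V : finType) (f : V -> 'rV[R]_3) (T : {set {set V}}) :=
  forall t a b, t \in T -> a \in t -> b \in t -> a != b -> sqd (f a) (f b) = 1.

Definition ext (V : finType) (f : V -> 'rV[R]_3) (X : 'rV[R]_3) (o : option V) :=
  if o is Some x then f x else X.

Lemma unitT_ear (V : finType) (T : {set {set V}}) f u v w :
  unitT f T -> sqd (f u) (f v) = 1 -> sqd (f v) (f w) = 1 -> sqd (f u) (f w) = 1 ->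
  unitT f ([set u; v; w] |: T).
Proof.
move=> hT h1 h2 h3 t a b /setU1P [->|tT]; last exact: hT.
apply: (tri_pairs (P := fun a b => sqd (f a) (f b) = 1)) => // x y; by rewrite sqdC.
Qed.

Lemma unitT_add (V : finType) (T : {set {set V}}) f u v X :
  unitT f T -> sqd (f u) (f v) = 1 -> sqd X (f u) = 1 -> sqd X (f v) = 1 ->
  unitT (ext f X) ([set Some u; None; Some v] |: liftT T).
Proof.
move=> hT h1 h2 h3 t a b /setU1P [->|].
  apply: (tri_pairs (P := fun a b => sqd (ext f X a) (ext f X b) = 1)) => //=.
  - by move=> x y; rewrite sqdC.
  - by rewrite sqdC.
case/imsetP=> t1 tT -> /imsetP[a1 ha ->] /imsetP[b1 hb ->] ab /=.
by apply: (hT t1) => //; apply: contraNneq ab => ->.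
Qed.

Lemma unitT_iso (V : finType) (T : {set {set V}}) f (g : 'rV[R]_3 -> 'rV[R]_3) :
  unitT f T -> (forall x y, sqd (g x) (g y) = sqd x y) -> unitT (g \o f) T.
Proof. by move=> hT hg t a b tT ha hb ab /=; rewrite hg; apply: (hT t). Qed.

End Final.

Section G2.
Variable R : realType.
Implicit Types (A B C : 'rV[R]_3).

Definition Xof A B C : 'rV[R]_3 :=
  A + (2/5) *: (C - A) + (1/5) *: (B - A) + (-(2/5)) *: cross (C - A) (B - A).

Lemma cfgD A B C : sqd A B = 4 -> sqd B C = 4 -> sqd C A = 1 ->
  let M1 := 2^-1 *: (A + B) in let M2 := 2^-1 *: (B + C) in let X := Xof A B C in
  [/\ [/\ sqd X A = 1, sqd X C = 1, sqd X M1 = 1, sqd X M2 = 1 & sqd X B = 3],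
      [/\ sqd A M1 = 1, sqd M2 C = 1, sqd M1 B = 1, sqd B M2 = 1 & sqd M1 M2 = 1/4] &
      [/\ sqd A B = 4, sqd A C = 1, sqd B C = 4 & sqd A X = 1]].
Proof.
move=> hAB hBC hCA M1 M2 X.
set u := C - A; set v := B - A; set n := cross u v.
pose E (a b c : R) := A + a *: u + b *: v + c *: n.
have duu : dot u u = 1 by rewrite -sqd_dot.
have dvv : dot v v = 4 by rewrite -sqd_dot sqdC.
have dun : dot u n = 0 by apply: dot_cross1.
have dvn : dot v n = 0 by apply: dot_cross2.
have eA : E 0 0 0 = A by apply/rowP => k; rewrite /E /n /u /v /M1 /M2 !mxE; ring.
have eB : E 0 1 0 = B by apply/rowP => k; rewrite /E /n /u /v /M1 /M2 !mxE; ring.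
have eC : E 1 0 0 = C by apply/rowP => k; rewrite /E /n /u /v /M1 /M2 !mxE; ring.
have eM1 : E 0 (2^-1) 0 = M1 by apply/rowP => k; rewrite /E /n /u /v /M1 /M2 !mxE; field.
have eM2 : E (2^-1) (2^-1) 0 = M2 by apply/rowP => k; rewrite /E /n /u /v /M1 /M2 !mxE; field.
have eX : E (2/5) (1/5) (-(2/5)) = X by [].
have duv : dot u v = 1/2.
  have := sqd_lin A u v n 0 1 0 1 0 0; rewrite -/(E _ _ _) -/(E _ _ _) eB eC hBC duu dvv dun dvn.
  lra.
have dnn : dot n n = 15/4 by rewrite dot_cross3 duu dvv duv; lra.
have dist : forall a1 b1 c1 a2 b2 c2, sqd (E a1 b1 c1) (E a2 b2 c2) =
  (a1 - a2) ^+ 2 * 1 + (b1 - b2) ^+ 2 * 4 + (c1 - c2) ^+ 2 * (15/4)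
  + 2 * (a1 - a2) * (b1 - b2) * (1/2).
  by move=> *; rewrite sqd_lin duu dvv dnn duv dun dvn; ring.
have eA' := eA; have eB' := eB; have eC' := eC.
split; [split|split|split].
- by rewrite -eX -{1}eA dist; lra.
- by rewrite -eX -{1}eC dist; lra.
- by rewrite -eX -eM1 dist; lra.
- by rewrite -eX -eM2 dist; lra.
- by rewrite -eX -{1}eB dist; lra.
- by rewrite -eM1 -{1}eA dist; lra.
- by rewrite -eM2 -{1}eC dist; lra.
- by rewrite -eM1 -{1}eB dist; lra.
- by rewrite -eM2 -{1}eB dist; lra.
- by rewrite -eM2 -eM1 dist; lra.
- by [].
- by rewrite sqdC.
- by [].
- by rewrite -eX -{1}eA dist; lra.
Qed.


Lemma cfgR (q0 q1 q2 q3 : 'rV[R]_3) : sqd q0 q1 = 1 -> sqd q1 q2 = 1 -> sqd q2 q3 = 1 ->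
  sqd q3 q0 = 1 -> sqd q0 q2 = 1/4 -> sqd q1 q3 = 3 ->
  let A := 2 *: q0 - q1 in let C := 2 *: q2 - q1 in
  [/\ [/\ sqd q3 A = 1, sqd A q0 = 1, sqd q3 C = 1, sqd C A = 1 & sqd q2 C = 1],
      [/\ sqd A q1 = 4, sqd A C = 1, sqd q1 C = 4, sqd C q3 = 1 & sqd A q3 = 1] &
      [/\ q0 = 2^-1 *: (A + q1) & q2 = 2^-1 *: (q1 + C)]].
Proof.
move=> h01 h12 h23 h30 h02 h13 A C.
set a := q0 - q1; set c := q2 - q1; set x := q3 - q1.
pose E (al be ga : R) := q1 + al *: a + be *: c + ga *: x.
have daa : dot a a = 1 by rewrite -sqd_dot.
have dcc : dot c c = 1 by rewrite -sqd_dot sqdC.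
have dxx : dot x x = 3 by rewrite -sqd_dot sqdC.
have e1 : E 0 0 0 = q1 by apply/rowP => k; rewrite /E /a /c /x !mxE; ring.
have e0 : E 1 0 0 = q0 by apply/rowP => k; rewrite /E /a /c /x !mxE; ring.
have e2 : E 0 1 0 = q2 by apply/rowP => k; rewrite /E /a /c /x !mxE; ring.
have e3 : E 0 0 1 = q3 by apply/rowP => k; rewrite /E /a /c /x !mxE; ring.
have eA : E 2 0 0 = A by apply/rowP => k; rewrite /E /a /c /x /A !mxE; ring.
have eC : E 0 2 0 = C by apply/rowP => k; rewrite /E /a /c /x /C !mxE; ring.
have dax : dot a x = 3/2.
  have := sqd_lin q1 a c x 0 0 1 1 0 0; rewrite -/(E _ _ _) -/(E _ _ _) e3 e0 h30 daa dcc dxx.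
  lra.
have dcx : dot c x = 3/2.
  have := sqd_lin q1 a c x 0 1 0 0 0 1; rewrite -/(E _ _ _) -/(E _ _ _) e3 e2 h23 daa dcc dxx.
  lra.
have dac : dot a c = 7/8.
  have := sqd_lin q1 a c x 1 0 0 0 1 0; rewrite -/(E _ _ _) -/(E _ _ _) e0 e2 h02 daa dcc dxx dax dcx.
  lra.
have dist : forall a1 b1 c1 a2 b2 c2, sqd (E a1 b1 c1) (E a2 b2 c2) =
  (a1 - a2) ^+ 2 + (b1 - b2) ^+ 2 + (c1 - c2) ^+ 2 * 3
  + 2 * (a1 - a2) * (b1 - b2) * (7/8) + 2 * (a1 - a2) * (c1 - c2) * (3/2)
  + 2 * (b1 - b2) * (c1 - c2) * (3/2).
  by move=> *; rewrite sqd_lin daa dcc dxx dax dcx dac; ring.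
split; [split|split|split].
- by rewrite -eA -e3 dist; lra.
- by rewrite -eA -e0 dist; lra.
- by rewrite -eC -e3 dist; lra.
- by rewrite -eC -eA dist; lra.
- by rewrite -eC -e2 dist; lra.
- by rewrite -eA -e1 dist; lra.
- by rewrite -eC -eA dist; lra.
- by rewrite -eC -e1 dist; lra.
- by rewrite -eC -e3 dist; lra.
- by rewrite -eA -e3 dist; lra.
- by apply/rowP => k; rewrite /A !mxE; field.
- by apply/rowP => k; rewrite /C !mxE; field.
Qed.


Definition mk3 (l : seq (seq R)) : 'M[R]_3 := \matrix_(i, j) nth 0 (nth [::] l i) j.

Definition pt4 (P0 P1 P2 P3 : 'rV[R]_3) (i : 'I_4) := nth 0 [:: P0; P1; P2; P3] i.

Lemma gramP P0 P1 P2 P3 :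
  let g i j := (sqd i P0 + sqd j P0 - sqd i j) / 2 in
  Pm (pt4 P0 P1 P2 P3) *m (Pm (pt4 P0 P1 P2 P3))^T =
  mk3 [:: [:: g P1 P1; g P1 P2; g P1 P3]; [:: g P2 P1; g P2 P2; g P2 P3];
          [:: g P3 P1; g P3 P2; g P3 P3]].
Proof.
move=> g; apply/matrixP => i j; rewrite gramE mxE.
by case: i => [[|[|[|//]]] hi]; case: j => [[|[|[|//]]] hj].
Qed.

Lemma inv3 (l li : seq (seq R)) : mk3 l *m mk3 li = 1%:M <->
  (forall i j : 'I_3, \sum_(k < 3) nth 0 (nth [::] l i) k * nth 0 (nth [::] li k) j = (i == j)%:R).
Proof.
split=> [/matrixP h i j|h]; last by apply/matrixP => i j; rewrite !mxE -h; apply: eq_bigr => k _; rewrite !mxE.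
by have := h i j; rewrite !mxE => <-; apply: eq_bigr => k _; rewrite !mxE.
Qed.


Definition GiD : seq (seq R) := [:: [:: 5/3; -(4/3); 1]; [:: -(4/3); 16/3; -(4/3)]; [:: 1; -(4/3); 5/3]].
Definition GiR : seq (seq R) := [:: [:: 1/3; 0; -(1/3)]; [:: 0; 4/3; -(2/3)]; [:: -(1/3); -(2/3); 5/3]].

Lemma gram_inv P0 P1 P2 P3 (d1 d2 d3 d12 d13 d23 : R) li :
  sqd P1 P0 = d1 -> sqd P2 P0 = d2 -> sqd P3 P0 = d3 ->
  sqd P1 P2 = d12 -> sqd P1 P3 = d13 -> sqd P2 P3 = d23 ->
  mk3 [:: [:: d1; (d1 + d2 - d12) / 2; (d1 + d3 - d13) / 2];
          [:: (d1 + d2 - d12) / 2; d2; (d2 + d3 - d23) / 2];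
          [:: (d1 + d3 - d13) / 2; (d2 + d3 - d23) / 2; d3]] *m mk3 li = 1%:M ->
  Pm (pt4 P0 P1 P2 P3) *m (Pm (pt4 P0 P1 P2 P3))^T *m mk3 li = 1%:M.
Proof.
move=> h1 h2 h3 h12 h13 h23 <-; rewrite gramP /=; congr (mk3 _ *m _).
rewrite ![sqd P2 P1]sqdC ![sqd P3 P1]sqdC ![sqd P3 P2]sqdC !sqd0 h1 h2 h3 h12 h13 h23.
by congr [:: [:: _; _; _]; [:: _; _; _]; [:: _; _; _]]; field.
Qed.

Lemma GiD_ok : mk3 [:: [:: 1; (1 + 1/4 - 1) / 2; (1 + 1 - 3) / 2];
          [:: (1 + 1/4 - 1) / 2; 1/4; (1/4 + 1 - 1) / 2];
          [:: (1 + 1 - 3) / 2; (1/4 + 1 - 1) / 2; 1]] *m mk3 GiD = 1%:M.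
Proof.
apply/inv3 => i j; rewrite !sum3 /GiD.
by case: i => [[|[|[|//]]] hi]; case: j => [[|[|[|//]]] hj] /=; field.
Qed.

Lemma GiR_ok : mk3 [:: [:: 4; (4 + 1 - 4) / 2; (4 + 1 - 3) / 2];
          [:: (4 + 1 - 4) / 2; 1; (1 + 1 - 1) / 2];
          [:: (4 + 1 - 3) / 2; (1 + 1 - 1) / 2; 1]] *m mk3 GiR = 1%:M.
Proof.
apply/inv3 => i j; rewrite !sum3 /GiR.
by case: i => [[|[|[|//]]] hi]; case: j => [[|[|[|//]]] hj] /=; field.
Qed.

End G2.

Notation o4 k := (@Ordinal 4 k isT).
Notation o5 k := (@Ordinal 5 k isT).

Section Main.
Variable R : realType.

Lemma sqdistE (u v : 'rV[R]_3) : sqdist u v = sqd u v.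
Proof. by []. Qed.

Lemma dist_all (p q : 'I_4 -> 'rV[R]_3) :
  sqd (p (o4 0)) (p (o4 1)) = sqd (q (o4 0)) (q (o4 1)) ->
  sqd (p (o4 0)) (p (o4 2)) = sqd (q (o4 0)) (q (o4 2)) ->
  sqd (p (o4 0)) (p (o4 3)) = sqd (q (o4 0)) (q (o4 3)) ->
  sqd (p (o4 1)) (p (o4 2)) = sqd (q (o4 1)) (q (o4 2)) ->
  sqd (p (o4 1)) (p (o4 3)) = sqd (q (o4 1)) (q (o4 3)) ->
  sqd (p (o4 2)) (p (o4 3)) = sqd (q (o4 2)) (q (o4 3)) ->
  forall i j, sqd (p i) (p j) = sqd (q i) (q j).
Proof.
move=> h01 h02 h03 h12 h13 h23.
have E4 : forall i : 'I_4, [\/ i = o4 0, i = o4 1, i = o4 2 | i = o4 3].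
  by case=> [[|[|[|[|//]]]] hi]; [constructor 1|constructor 2|constructor 3|constructor 4];
     apply: val_inj.
move=> i j; case: (E4 i) => ->; case: (E4 j) => ->; rewrite ?sqd0 //;
  first [ rewrite h01 // | rewrite h02 // | rewrite h03 // | rewrite h12 // | rewrite h13 //
        | rewrite h23 // | rewrite sqdC h01 sqdC // | rewrite sqdC h02 sqdC //
        | rewrite sqdC h03 sqdC // | rewrite sqdC h12 sqdC // | rewrite sqdC h13 sqdC //
        | rewrite sqdC h23 sqdC // ].
Qed.


Lemma rh_facts (q : 'I_4 -> 'rV[R]_3) : unit_rhombus (2^-1) (Num.sqrt 3) q ->
  [/\ sqd (q (o4 0)) (q (o4 1)) = 1, sqd (q (o4 1)) (q (o4 2)) = 1,
      sqd (q (o4 2)) (q (o4 3)) = 1, sqd (q (o4 3)) (q (o4 0)) = 1 &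
      sqd (q (o4 0)) (q (o4 2)) = 1/4 /\ sqd (q (o4 1)) (q (o4 3)) = 3].
Proof.
case=> hq h02 h13.
have e0 : inord 0 = o4 0 by apply: val_inj; rewrite /= inordK.
have e1 : inord 1 = o4 1 by apply: val_inj; rewrite /= inordK.
have e2 : inord 2 = o4 2 by apply: val_inj; rewrite /= inordK.
have e3 : inord 3 = o4 3 by apply: val_inj; rewrite /= inordK.
rewrite e0 e1 e2 e3 in h02 h13.
split.
- by have := hq (o4 0); rewrite (_ : ordS (o4 0) = o4 1) //; apply: val_inj.
- by have := hq (o4 1); rewrite (_ : ordS (o4 1) = o4 2) //; apply: val_inj.
- by have := hq (o4 2); rewrite (_ : ordS (o4 2) = o4 3) //; apply: val_inj.
- by have := hq (o4 3); rewrite (_ : ordS (o4 3) = o4 0) //; apply: val_inj.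
split.
  by move: h02; rewrite sqdistE => ->; field.
by move: h13; rewrite sqdistE => ->; rewrite sqr_sqrtr // ler0n.
Qed.


Lemma DtoR (p : 'I_5 -> 'rV[R]_3) (q : 'I_4 -> 'rV[R]_3) :
  triangle221 p -> unit_rhombus (2^-1) (Num.sqrt 3) q -> domeable p -> domeable q.
Proof.
move=> [A [B [C [hAB hBC hCA ep]]]] hrh [V [T [f [w [hS hU hW]]]]].
case: (rh_facts hrh) => q01 q12 q23 q30 [q02 q13].
rewrite !sqdistE in hAB hBC hCA.
case: (cfgD hAB hBC hCA) => [[xA xC xM1 xM2 xB] [aM1 m2C m1B bM2 m1m2] _].
set X := Xof A B C in xA xC xM1 xM2 xB.
set M1 := 2^-1 *: (A + B) in xM1 aM1 m1B m1m2.
set M2 := 2^-1 *: (B + C) in xM2 m2C bM2 m1m2.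
have winj : injective w by case: hS => _ _ _ _ [_ []].
have fA : f (w (o5 0)) = A by rewrite hW ep.
have fM1 : f (w (o5 1)) = M1 by rewrite hW ep.
have fB : f (w (o5 2)) = B by rewrite hW ep.
have fM2 : f (w (o5 3)) = M2 by rewrite hW ep.
have fC : f (w (o5 4)) = C by rewrite hW ep.
have S0 : surf T [:: w (o5 0); w (o5 1); w (o5 2); w (o5 3); w (o5 4)].
  apply: (surf_of_sbc2 (x0 := w (o5 0)) _ _ _ hS) => //.
  by case=> [[|[|[|[|[|//]]]]] hi] /=; congr w; apply: val_inj.
have S1 : surf T [:: w (o5 4); w (o5 0); w (o5 1); w (o5 2); w (o5 3)] := surf_rot 4 S0.
have S2 := surf_add S1.
have S3 : surf ([set Some (w (o5 4)); None; Some (w (o5 0))] |: liftT T)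
   [:: None; Some (w (o5 0)); Some (w (o5 1)); Some (w (o5 2)); Some (w (o5 3)); Some (w (o5 4))]
  := surf_rot 1 S2.
set T2 := [set Some (w (o5 4)); None; Some (w (o5 0))] |: liftT T.
have na1 : forall t, t \in T2 -> ~~ ((None \in t) && (Some (w (o5 1)) \in t)).
  move=> t /setU1P[->|/noneL /negbTE -> //].
  by rewrite !inE !(inj_eq (@S_inj _)) !(inj_eq winj).
have S4 := surf_ear S3 isT na1.
set T4 := [set None; Some (w (o5 0)); Some (w (o5 1))] |: T2.
have S5 : surf T4 [:: Some (w (o5 3)); Some (w (o5 4)); None; Some (w (o5 1)); Some (w (o5 2))]
  := surf_rot 3 S4.
have na2 : forall t, t \in T4 -> ~~ ((Some (w (o5 3)) \in t) && (None \in t)).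
  move=> t /setU1P[->|/setU1P[->|/noneL /negbTE ->]]; last by rewrite andbF.
    by rewrite !inE !(inj_eq (@S_inj _)) !(inj_eq winj).
  by rewrite !inE !(inj_eq (@S_inj _)) !(inj_eq winj).
have S6 := surf_ear S5 isT na2.
set T6 := [set Some (w (o5 3)); Some (w (o5 4)); None] |: T4.
have S7 : surf T6 [:: Some (w (o5 1)); Some (w (o5 2)); Some (w (o5 3)); None] := surf_rot 2 S6.
set f1 := ext f X.
have U2 : unitT f1 T2.
  apply: unitT_add => //; by rewrite ?fC ?fA.
have U4 : unitT f1 T4.
  by apply: unitT_ear => //=; rewrite ?fA ?fM1.
have U6 : unitT f1 T6.
  by apply: unitT_ear => //=; rewrite ?fM2 ?fC // sqdC.
set pr := pt4 M1 B M2 X.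
have hd : forall i j, sqd (pr i) (pr j) = sqd (q i) (q j).
  apply: dist_all => /=.
  - by rewrite m1B q01.
  - by rewrite m1m2 q02.
  - by rewrite sqdC xM1 sqdC q30.
  - by rewrite bM2 q12.
  - by rewrite sqdC xB q13.
  - by rewrite sqdC xM2 q23.
have hG : Pm pr *m (Pm pr)^T *m mk3 (GiD R) = 1%:M.
  apply: (gram_inv (d1 := 1) (d2 := 1/4) (d3 := 1) (d12 := 1) (d13 := 3) (d23 := 1)).
  - by rewrite sqdC.
  - by rewrite sqdC.
  - by [].
  - by [].
  - by rewrite sqdC.
  - by rewrite sqdC.
  exact: GiD_ok.
case: (iso4 hd hG) => L [hL hLp].
pose g := fun x => q ord0 + (x - pr ord0) *m L.
have U7 : unitT (g \o f1) T6 by apply: unitT_iso.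
exists (option V), T6, (g \o f1), (fun i : 'I_4 => nth None [:: Some (w (o5 1)); Some (w (o5 2)); Some (w (o5 3)); None] i).
split.
- by apply: (@sbc_of_surf _ T6 _ None 4 _ S7).
- exact: U7.
have E4 : forall i : 'I_4, [\/ i = o4 0, i = o4 1, i = o4 2 | i = o4 3].
  by case=> [[|[|[|[|//]]]] hi]; [constructor 1|constructor 2|constructor 3|constructor 4];
     apply: val_inj.
move=> i; rewrite /= /g -(hLp i); congr (_ + (_ - _) *m L).
case: (E4 i) => ->; rewrite /= ?fM1 ?fB ?fM2 //.
Qed.


Lemma RtoD (p : 'I_5 -> 'rV[R]_3) (q : 'I_4 -> 'rV[R]_3) :
  triangle221 p -> unit_rhombus (2^-1) (Num.sqrt 3) q -> domeable q -> domeable p.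
Proof.
move=> [A [B [C [hAB hBC hCA ep]]]] hrh [V [T [f [w [hS hU hW]]]]].
case: (rh_facts hrh) => q01 q12 q23 q30 [q02 q13].
rewrite !sqdistE in hAB hBC hCA.
case: (cfgD hAB hBC hCA) => [[xA xC _ _ xB] _ [_ hAC _ hAX]].
set X := Xof A B C in xA xC xB hAX.
case: (cfgR q01 q12 q23 q30 q02 q13) => [[aX aQ0 cX cA q2C] [aq1 ac q1c cx ax] [mq0 mq2]].
set A' := 2 *: q (o4 0) - q (o4 1) in aX aQ0 cA aq1 ac ax mq0.
set C' := 2 *: q (o4 2) - q (o4 1) in cX cA q2C ac q1c cx mq2.
have winj : injective w by case: hS => _ _ _ _ [_ []].
have S0 : surf T [:: w (o4 0); w (o4 1); w (o4 2); w (o4 3)].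
  apply: (surf_of_sbc2 (x0 := w (o4 0)) _ _ _ hS) => //.
  by case=> [[|[|[|[|//]]]] hi] /=; congr w; apply: val_inj.
have S1 : surf T [:: w (o4 3); w (o4 0); w (o4 1); w (o4 2)] := surf_rot 3 S0.
set T2 := [set Some (w (o4 3)); None; Some (w (o4 0))] |: liftT T.
have S2 : surf T2 [:: Some (w (o4 3)); None; Some (w (o4 0)); Some (w (o4 1)); Some (w (o4 2))]
  := surf_add S1.
set f1 := ext f A'.
have U2 : unitT f1 T2.
  by apply: unitT_add => //; rewrite ?hW // sqdC.
set T3 := [set Some (Some (w (o4 3))); None; Some None] |: liftT T2.
have S3 : surf T3 [:: Some (Some (w (o4 3))); None; Some None; Some (Some (w (o4 0)));
                      Some (Some (w (o4 1))); Some (Some (w (o4 2)))] := surf_add S2.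
set f2 := ext f1 C'.
have U3 : unitT f2 T3.
  by apply: unitT_add => //=; rewrite ?hW // sqdC.
have S4 : surf T3 [:: Some (Some (w (o4 2))); Some (Some (w (o4 3))); None; Some None;
                      Some (Some (w (o4 0))); Some (Some (w (o4 1)))] := surf_rot 5 S3.
have na : forall t, t \in T3 -> ~~ ((Some (Some (w (o4 2))) \in t) && (None \in t)).
  move=> t /setU1P[->|/noneL /negbTE ->]; last by rewrite andbF.
  by rewrite !inE !(inj_eq (@S_inj _)) !(inj_eq winj).
have S5 := surf_ear S4 isT na.
set T5 := [set Some (Some (w (o4 2))); Some (Some (w (o4 3))); None] |: T3.
have U5 : unitT f2 T5.
  by apply: unitT_ear => //=; rewrite ?hW // sqdC.
have S6 : surf T5 [:: Some None; Some (Some (w (o4 0))); Some (Some (w (o4 1)));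
                      Some (Some (w (o4 2))); None] := surf_rot 2 S5.
set pr := pt4 A' (q (o4 1)) C' (q (o4 3)).
set qr := pt4 A B C X.
have hd : forall i j, sqd (pr i) (pr j) = sqd (qr i) (qr j).
  apply: dist_all => /=.
  - by rewrite aq1 hAB.
  - by rewrite ac hAC.
  - by rewrite ax hAX.
  - by rewrite q1c hBC.
  - by rewrite q13 sqdC xB.
  - by rewrite cx sqdC xC.
have hG : Pm pr *m (Pm pr)^T *m mk3 (GiR R) = 1%:M.
  apply: (gram_inv (d1 := 4) (d2 := 1) (d3 := 1) (d12 := 4) (d13 := 3) (d23 := 1)).
  - by rewrite sqdC.
  - by [].
  - by [].
  - by [].
  - by [].
  - by [].
  exact: GiR_ok.
case: (iso4 hd hG) => L [hL hLp].
pose g := fun x => qr ord0 + (x - pr ord0) *m L.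
have U7 : unitT (g \o f2) T5 by apply: unitT_iso.
have aff : forall a b, g (2^-1 *: (a + b)) = 2^-1 *: (g a + g b).
  by move=> a b; apply/rowP => k; rewrite /g !mxE !sum3 !mxE; field.
have gp : forall i, g (pr i) = qr i by move=> i; rewrite /g hLp.
exists (option (option V)), T5, (g \o f2),
  (fun i : 'I_5 => nth None [:: Some None; Some (Some (w (o4 0))); Some (Some (w (o4 1)));
                      Some (Some (w (o4 2))); None] i).
split.
- by apply: (@sbc_of_surf _ T5 _ None 5 _ S6).
- exact: U7.
rewrite ep; case=> [[|[|[|[|[|//]]]]] hi] /=.
- exact: (gp (o4 0)).
- by rewrite hW mq0 aff (gp (o4 0)) (gp (o4 1)).
- by rewrite hW (gp (o4 1)).
- by rewrite hW mq2 aff (gp (o4 1)) (gp (o4 2)).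
- exact: (gp (o4 2)).
Qed.

Lemma prop_main (p : 'I_5 -> 'rV[R]_3) (q : 'I_4 -> 'rV[R]_3) :
  triangle221 p -> unit_rhombus (2^-1) (Num.sqrt 3) q ->
  (domeable p <-> domeable q).
Proof. by move=> hp hq; split; [apply: DtoR | apply: RtoD]. Qed.

End Main.

Unset Implicit Arguments.

Theorem proposition5p2 (R : realType) (p : 'I_5 -> 'rV[R]_3) (q : 'I_4 -> 'rV[R]_3) :
  triangle221 p -> unit_rhombus (2^-1) (Num.sqrt 3) q ->
  (domeable p <-> domeable q).
Proof. exact: prop_main. Qed.
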